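(* There exist constants $c(\beta)>0$ depending only on the integer $\beta\ge0$, and absolute constants $c_1,c_2,c_3,c_4>0$, such that for all $d\ge1$, $n\ge3$, $j\in\{1,\dots,d\}$, $h,s>0$, the following hold for $\boldsymbol X_1,\dots,\boldsymbol X_n$ i.i.d. from $p_\pi$: (1) if $\pi$ is supported on $[0,h]^d$, then $\mathbb E\big[(1+X_{j,\max})^\beta\prod_{k\ne j}(1+X_{k,\max})\big]\le c(\beta)\big(\max\{c_1,c_2h\}\frac{\log n}{\log\log n}\big)^{d-1+\beta}$; (2) if $\pi$ is supported on $[0,s\log n]^d$, then $\mathbb E\big[(1+X_{j,\max})^\beta\prod_{k\ne j}(1+X_{k,\max})\big]\le c(\beta)\big(\max\{c_3,c_4s\}\log n\big)^{d-1+\beta}$.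
   Context: Multidimensional Poisson mixture: $\boldsymbol\theta\sim\pi$ on $\mathbb R_+^d$, and given $\boldsymbol\theta$ the coordinates $X_k\sim\mathrm{Poi}(\theta_k)$ are independent; $p_\pi$ is the law of $\boldsymbol X$. $X_{k,\max}=\max_{1\le i\le n}X_{ik}$. *)

(* Defs.v *)
From mathcomp Require Import all_boot all_order all_algebra.
From mathcomp Require Import all_classical all_reals all_analysis.
Set Implicit Arguments. Unset Strict Implicit. Unset Printing Implicit Defensive.
Import Order.TTheory GRing.Theory Num.Theory.
Local Open Scope ring_scope.

Definition poi_pmf {R : realType} (th : R) (m : nat) : R := expR (- th) * th ^+ m / (m`!)%:R.

(* The mixing distribution pi on R_+^d is represented as the law of a random
   vector theta = (theta_k)_{k<d} on a probability space (T, P).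
   p_mix P theta x = p_pi(x) = E_pi [ prod_k Poi(theta_k)(x_k) ]. *)
Definition p_mix {R : realType} (d0 : measure_display) (T : measurableType d0)
  (P : probability T R) (d : nat) (theta : 'I_d -> T -> R) (x : {ffun 'I_d -> nat})
  : \bar R :=
  (\int[P]_t (\prod_(k < d) poi_pmf (theta k t) (x k))%:E)%E.

Definition xmax (n d : nat) (X : {ffun 'I_n -> {ffun 'I_d -> nat}}) (k : 'I_d) : nat :=
  (\max_(i < n) X i k)%N.

(* Expectation of f(X_1,...,X_n) for X_1..X_n i.i.d. from p_pi (f >= 0). *)
Definition mix_expect {R : realType} (d0 : measure_display) (T : measurableType d0)
  (P : probability T R) (d : nat) (theta : 'I_d -> T -> R) (n : nat)
  (f : {ffun 'I_n -> {ffun 'I_d -> nat}} -> R) : \bar R :=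
  (\esum_(X in [set: {ffun 'I_n -> {ffun 'I_d -> nat}}])
     (\big[*%E/1%E]_(i < n) p_mix P theta (X i)) * (f X)%:E)%E.

Definition moment_stat {R : realType} (n d : nat) (j : 'I_d) (beta : nat)
  (X : {ffun 'I_n -> {ffun 'I_d -> nat}}) : R :=
  (1 + xmax X j)%:R ^+ beta * \prod_(k < d | k != j) (1 + xmax X k)%:R.

Definition supported_box {R : realType} (d0 : measure_display) (T : measurableType d0)
  (P : probability T R) (d : nat) (theta : 'I_d -> T -> R) (a : R) : Prop :=
  P [set t | forall k, 0 <= theta k t <= a]%classic = 1%E.

(* Main.v *)
Require Import Defs.
From mathcomp Require Import all_boot all_order all_algebra.
From mathcomp Require Import all_classical all_reals all_analysis.
From mathcomp Require Import ring lra measurable_realfun finmap.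
Import Order.TTheory GRing.Theory Num.Theory.
Local Open Scope ring_scope.
Local Open Scope classical_set_scope.

Set Implicit Arguments. Unset Strict Implicit. Unset Printing Implicit Defensive.

Section ES.
Variable R : realType.
Local Open Scope ereal_scope.

Lemma esumZl_le (T : choiceType) (c : \bar R) (a : T -> \bar R) :
  0 <= c -> (forall i, 0 <= a i) ->
  \esum_(i in [set: T]) (c * a i) <= c * \esum_(i in [set: T]) a i.
Proof.
move=> c0 a0; apply: ge_ereal_sup => _ [A [finA _] <-].
rewrite -ge0_mule_fsumr//; apply: lee_wpmul2l => //.
by apply: ereal_sup_ubound; exists A.
Qed.

Lemma esumZr_le (T : choiceType) (c : \bar R) (a : T -> \bar R) :
  0 <= c -> (forall i, 0 <= a i) ->
  \esum_(i in [set: T]) (a i * c) <= (\esum_(i in [set: T]) a i) * c.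
Proof.
move=> c0 a0; apply: ge_ereal_sup => _ [A [finA _] <-].
rewrite -ge0_mule_fsuml//; apply: lee_wpmul2r => //.
by apply: ereal_sup_ubound; exists A.
Qed.

Lemma esum_prod_le (B : choiceType) (N : nat) (f : 'I_N -> B -> \bar R) :
  (forall i b, 0 <= f i b) ->
  \esum_(X in [set: {ffun 'I_N -> B}]) \prod_(i < N) f i (X i)
   <= \prod_(i < N) \esum_(b in [set: B]) f i b.
Proof.
elim: N f => [|N IH] f f0.
  rewrite big_ord0; under eq_esum do rewrite big_ord0.
  have -> : [set: {ffun 'I_0 -> B}] = [set ffun0 (card_ord 0)].
    apply/seteqP; split => X _ //=; apply/ffunP => -[] //.
  by rewrite esum_set1.
pose e (p : B * {ffun 'I_N -> B}) : {ffun 'I_N.+1 -> B} :=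
  [ffun i => if unlift ord0 i is Some j then p.2 j else p.1].
have eT : e @` [set: B * {ffun 'I_N -> B}] = [set: {ffun 'I_N.+1 -> B}].
  apply/seteqP; split => // X _; exists (X ord0, [ffun j => X (lift ord0 j)]) => //.
  apply/ffunP => i; rewrite ffunE; case: unliftP => [j ->|->] //=.
  by rewrite ffunE.
have einj : set_inj [set: B * {ffun 'I_N -> B}] e.
  move=> [b Y] [b' Y'] _ _ /ffunP H.
  have := H ord0; rewrite !ffunE unlift_none /= => ->.
  congr pair; apply/ffunP => j; have := H (lift ord0 j).
  by rewrite !ffunE liftK.
rewrite -eT esum_image //.
have -> : [set: B * {ffun 'I_N -> B}] = [set: B] `*`` (fun=> [set: {ffun 'I_N -> B}]).
  by apply/seteqP; split.
rewrite -(@esum_esum R _ _ [set: B] (fun=> [set: {ffun 'I_N -> B}]) (fun b Y => \prod_(i < N.+1) f i (e (b, Y) i))); last by move=> *; apply: prode_ge0.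
rewrite big_ord_recl.
apply: le_trans (_ : \esum_(b in [set: B]) (f ord0 b *
   \prod_(i < N) \esum_(b0 in [set: B]) f (lift ord0 i) b0) <= _).
  apply: le_esum => b _.
  apply: le_trans (_ : \esum_(Y in [set: {ffun 'I_N -> B}]) (f ord0 b *
     \prod_(i < N) f (lift ord0 i) (Y i)) <= _).
    apply: le_esum => Y _; rewrite big_ord_recl /e /= !ffunE unlift_none.
    by under eq_bigr do rewrite ffunE liftK.
  apply: le_trans; first by apply: esumZl_le => // Y; apply: prode_ge0.
  by apply: lee_wpmul2l => //; apply: IH.
apply: esumZr_le => //; apply: prode_ge0 => i _; apply: esum_ge0 => *; exact: f0.
Qed.

End ES.

Section P.
Variable R : realType.

Lemma poi_pmf_ge0 (th : R) m : 0 <= th -> 0 <= poi_pmf th m.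
Proof.
move=> th0; rewrite /poi_pmf; apply: divr_ge0; last exact: ler0n.
by apply: mulr_ge0; [exact: expR_ge0| exact: exprn_ge0].
Qed.

Lemma series_le_expR (x : R) N : 0 <= x -> series (exp_coeff x) N <= expR x.
Proof.
move=> x0; apply: nondecreasing_cvgn_le; last exact: is_cvg_series_exp_coeff.
apply: nondecreasing_series => n _ _; exact: exp_coeff_ge0.
Qed.

Lemma poi_mgf_le (th z : R) : 0 <= th -> 0 <= z ->
  (\esum_(m in [set: nat]) (poi_pmf th m * z ^+ m)%:E
    <= (expR (- th) * expR (th * z))%:E)%E.
Proof.
move=> th0 z0; rewrite -nneseries_esumT; last first.
  by move=> m; rewrite lee_fin; apply: mulr_ge0; [exact: poi_pmf_ge0|exact: exprn_ge0].
apply: lime_le; first by apply: is_cvg_nneseries => m _ _; rewrite lee_fin;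
  apply: mulr_ge0; [exact: poi_pmf_ge0|exact: exprn_ge0].
apply: nearW => N; rewrite sumEFin lee_fin.
rewrite (_ : \sum_(0 <= i < N) _ = expR (- th) * series (exp_coeff (th * z)) N).
  apply: ler_wpM2l; first exact: expR_ge0.
  by apply: series_le_expR; exact: mulr_ge0.
rewrite /series /= mulr_sumr; apply: eq_bigr => i _.
by rewrite /poi_pmf /exp_coeff /= exprMn; field.
Qed.

End P.

Section M.
Variable R : realType.
Local Open Scope ereal_scope.

Lemma lee_prod_nn (I : Type) (r : seq I) (f g : I -> \bar R) :
  (forall i, 0 <= f i <= g i) -> \prod_(i <- r) f i <= \prod_(i <- r) g i.
Proof.
move=> fg.
suff : 0 <= \prod_(i <- r) f i <= \prod_(i <- r) g i by case/andP.
elim/big_ind2: _ => [|x1 x2 y1 y2 /andP[x10 x12] /andP[y10 y12]|i _].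
- by rewrite lee01 lexx.
- by apply/andP; split; [exact: mule_ge0|exact: lee_pmul].
- exact: fg.
Qed.

Lemma pmix_esum_le (d0 : measure_display) (T : measurableType d0)
  (P : probability T R) (d : nat) (theta : 'I_d -> T -> R) (a : R)
  (psi : 'I_d -> nat -> R) (Q : 'I_d -> R) :
  (forall k, measurable_fun setT (theta k)) -> supported_box P theta a ->
  (forall k m, (0 <= psi k m)%R) -> (forall k, (0 <= Q k)%R) ->
  (forall k (th : R), (0 <= th <= a)%R ->
     \esum_(m in [set: nat]) (poi_pmf th m * psi k m)%:E <= (Q k)%:E) ->
  \esum_(x in [set: {ffun 'I_d -> nat}])
      (p_mix P theta x * (\prod_(k < d) psi k (x k))%R%:E)
   <= (\prod_(k < d) Q k)%R%:E.
Proof.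
move=> mth Psupp psi0 Q0 HQ.
set S := [set t | forall k, (0 <= theta k t <= a)%R].
have mS : measurable S.
  have -> : S = \bigcap_(k in [set: 'I_d]) (theta k @^-1` `[0%R, a]).
    apply/seteqP; split => t /=.
      by move=> H k _ /=; rewrite in_itv /= H.
    by move=> H k; have := H k I; rewrite /= in_itv.
  apply: fin_bigcap_measurable; first exact: finite_finset.
  by move=> k _; rewrite -[X in measurable X]setTI; apply: mth => //; exact: measurable_itv.
have PS : P (~` S) = 0.
  by rewrite probability_setC // -/S; move: Psupp; rewrite /supported_box -/S => ->; rewrite subee.
have mg : forall x, measurable_fun setT
    (fun t => \prod_(k < d) poi_pmf (theta k t) (x k))%R.
  move=> x; apply: measurable_prod => k _; rewrite /poi_pmf.
  apply: measurable_funM; last exact: measurable_cst.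
  apply: measurable_funM; last exact: measurable_funX.
  by apply: measurableT_comp => //; apply: measurable_funN.
have pS : forall x, p_mix P theta x =
    \int[P]_(t in S) (\prod_(k < d) poi_pmf (theta k t) (x k))%R%:E.
  move=> x; rewrite /p_mix [RHS]integral_mkcond; apply: ae_eq_integral => //.
  - by apply/measurable_EFinP; exact: mg.
  - apply/(measurable_restrictT _ _).1 => //.
    apply/measurable_EFinP; apply: measurable_funS (mg x) => //.
  - exists (~` S); split => //; first exact: measurableC.
    move=> t /= H St; apply: H => _; rewrite patchE ifT //; exact: mem_set.
apply: ge_ereal_sup => _ [A [finA _] <-].
rewrite fsbig_finite //=.
set g := fun (x : {ffun 'I_d -> nat}) t => (\prod_(k < d) poi_pmf (theta k t) (x k))%R.
have g0 : forall x t, S t -> (0 <= g x t)%R.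
  move=> x t St; apply: prodr_ge0 => k _; apply: poi_pmf_ge0; by case/andP: (St k).
set c := fun x : {ffun 'I_d -> nat} => (\prod_(k < d) psi k (x k))%R.
have c0 : forall x, (0 <= c x)%R by move=> x; apply: prodr_ge0.
rewrite (eq_bigr (fun x => \int[P]_(t in S) (g x t * c x)%:E)); last first.
  move=> x _; rewrite pS -ge0_integralZr //; try (by move=> t St; rewrite lee_fin; apply: g0);
    try (by rewrite lee_fin).
  by apply/measurable_EFinP; exact: measurable_funS (mg x).
  by rewrite lee_fin; apply: prodr_ge0.
have mfs : forall y, measurable_fun S (fun t => (g y t * c y)%:E).
  move=> y; apply/measurable_EFinP; apply: measurable_funM; last exact: measurable_cst.
  exact: measurable_funS (mg y).
have f0s : forall x t, S t -> 0 <= (g x t * c x)%:E.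
  by move=> x t St; rewrite lee_fin; apply: mulr_ge0 => //; apply: g0.
apply: (@le_trans _ _ (\int[P]_(t in S) (\sum_(x <- (fset_set A : seq _)) (g x t * c x)%:E)%R)).
  rewrite (ge0_integral_sum P mS mfs f0s); exact: le_refl.
apply: le_trans (_ : \int[P]_(t in S) (\prod_(k < d) Q k)%R%:E <= _).
  have F10 : forall t, S t -> 0 <= (\sum_(x <- (fset_set A : seq _)) (g x t * c x)%:E)%R.
    by move=> t St; apply: sume_ge0 => x _; apply: f0s.
  have MF1 : measurable_fun S (fun t => (\sum_(x <- (fset_set A : seq _)) (g x t * c x)%:E)%R).
    by apply: emeasurable_sum => x; apply: mfs.
  apply: (ge0_le_integral P mS F10 MF1); first exact: measurable_cst.
  move=> t St.
  apply: le_trans (_ : \esum_(x in [set: {ffun 'I_d -> nat}]) (g x t * c x)%:E <= _).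
    apply: ereal_sup_ubound; exists A => //; by rewrite fsbig_finite.
  apply: le_trans (_ : \esum_(x in [set: {ffun 'I_d -> nat}])
      \prod_(k < d) (poi_pmf (theta k t) (x k) * psi k (x k))%:E <= _).
    apply: le_esum => x _; rewrite prodEFin /g /c -big_split /=; exact: le_refl.
  apply: le_trans; first apply: (@esum_prod_le R _ d (fun k m => (poi_pmf (theta k t) m * psi k m)%:E)).

    by move=> k m; rewrite lee_fin; apply: mulr_ge0 => //; apply: poi_pmf_ge0; case/andP: (St k).
  rewrite -prodEFin; apply: lee_prod_nn => k; apply/andP; split.
    by apply: esum_ge0 => m _; rewrite lee_fin; apply: mulr_ge0 => //; apply: poi_pmf_ge0; case/andP: (St k).
  exact: HQ.
rewrite integral_cst //.
rewrite -[leRHS]mule1; apply: lee_wpmul2l; last exact: probability_le1.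
by rewrite lee_fin; apply: prodr_ge0.

Qed.

Lemma p_mix_ge0 (d0 : measure_display) (T : measurableType d0)
  (P : probability T R) (d : nat) (theta : 'I_d -> T -> R) (a : R) (z : {ffun 'I_d -> nat}) :
  (forall k, measurable_fun setT (theta k)) -> supported_box P theta a ->
  0 <= p_mix P theta z.
Proof.
move=> mth Psupp.
set S := [set t | forall k, (0 <= theta k t <= a)%R].
have mS : measurable S.
  have -> : S = \bigcap_(k in [set: 'I_d]) (theta k @^-1` `[0%R, a]).
    apply/seteqP; split => t /=.
      by move=> H k _ /=; rewrite in_itv /= H.
    by move=> H k; have := H k I; rewrite /= in_itv.
  apply: fin_bigcap_measurable; first exact: finite_finset.
  by move=> k _; rewrite -[X in measurable X]setTI; apply: mth => //; exact: measurable_itv.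
have PS : P (~` S) = 0.
  by rewrite probability_setC // -/S; move: Psupp; rewrite /supported_box -/S => ->; rewrite subee.
have mg : forall x, measurable_fun setT
    (fun t => \prod_(k < d) poi_pmf (theta k t) (x k))%R.
  move=> x; apply: measurable_prod => k _; rewrite /poi_pmf.
  apply: measurable_funM; last exact: measurable_cst.
  apply: measurable_funM; last exact: measurable_funX.
  by apply: measurableT_comp => //; apply: measurable_funN.
have pS : forall x, p_mix P theta x =
    \int[P]_(t in S) (\prod_(k < d) poi_pmf (theta k t) (x k))%R%:E.
  move=> x; rewrite /p_mix [RHS]integral_mkcond; apply: ae_eq_integral => //.
  - by apply/measurable_EFinP; exact: mg.
  - apply/(measurable_restrictT _ _).1 => //.
    apply/measurable_EFinP; apply: measurable_funS (mg x) => //.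
  - exists (~` S); split => //; first exact: measurableC.
    move=> t /= H St; apply: H => _; rewrite patchE ifT //; exact: mem_set.
rewrite pS; apply: integral_ge0 => t St; rewrite lee_fin.
apply: prodr_ge0 => k _; apply: poi_pmf_ge0; by case/andP: (St k).
Qed.

End M.

Section D.
Variable R : realType.

Lemma one_bound (a K m : nat) (mu : R) : 0 <= mu -> a%:R <= mu * (1 + K%:R) ->
  ((1 + m)%N%:R) ^+ a <= (1 + K%:R) ^+ a * (1 + expR (mu * (m%:R - K%:R))).
Proof.
move=> mu0 haK.
have K1 : 0 < 1 + K%:R :> R by rewrite ltr_wpDr.
have e0 := expR_ge0 (mu * (m%:R - K%:R)).
case: (leqP m K) => mK.
  rewrite -[X in X <= _]mulr1; apply: ler_pM.
  - by apply: exprn_ge0; rewrite ler0n.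
  - by [].
  - by rewrite natrD; apply: lerXn2r; rewrite ?nnegrE ?addr_ge0 // lerD2l ler_nat.
  - by rewrite lerDl.
apply: le_trans (_ : (1 + K%:R) ^+ a * expR (mu * (m%:R - K%:R)) <= _); last first.
  by apply: ler_wpM2l; [apply: exprn_ge0; exact: ltW | rewrite lerDr].
pose y : R := (m%:R - K%:R) / (1 + K%:R).
have y0 : 0 <= y.
  by rewrite /y divr_ge0 ?subr_ge0 ?ler_nat ?(ltnW mK) // ltW.
have H1 : (1 + m)%N%:R <= (1 + K%:R) * expR y.
  apply: le_trans (_ : (1 + K%:R) * (1 + y) <= _); last first.
    by apply: ler_wpM2l; [exact: ltW|exact: expR_ge1Dx].
  rewrite /y mulrDr mulr1 mulrCA divff ?mulr1; last by rewrite gt_eqF.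
  rewrite natrD; lra.
apply: le_trans (_ : ((1 + K%:R) * expR y) ^+ a <= _).
  by apply: lerXn2r; rewrite ?nnegrE ?ler0n // mulr_ge0 ?expR_ge0 // ltW.
rewrite exprMn; apply: ler_wpM2l; first by apply: exprn_ge0; exact: ltW.
rewrite -expRM_natl ler_expR /y mulrA.
have mK' : 0 <= m%:R - K%:R :> R by rewrite subr_ge0 ler_nat ltnW.
rewrite [X in _ <= X]mulrC; rewrite -mulrA [X in X <= _]mulrC -mulrA.
apply: ler_wpM2l => //.
by rewrite mulrC ler_pdivrMr // mulrC.
Qed.

Lemma prod_ge1 (I : Type) (r : seq I) (P : pred I) (f : I -> R) :
  (forall i, 1 <= f i) -> 1 <= \prod_(i <- r | P i) f i.
Proof.
move=> f1; elim/big_ind: _ => // u v u1 v1.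
by rewrite -[1]mulr1; apply: ler_pM.
Qed.

Lemma max_bound n (x : 'I_n -> nat) (a K : nat) (mu : R) :
  0 <= mu -> a%:R <= mu * (1 + K%:R) ->
  ((1 + \max_(i < n) x i)%N%:R) ^+ a <=
  (1 + K%:R) ^+ a * \prod_(i < n) (1 + expR (mu * ((x i)%:R - K%:R))).
Proof.
move=> mu0 haK.
set Pi := \prod_(i < n) _.
have K1 : 1 <= (1 + K%:R) ^+ a :> R by apply: exprn_ege1; rewrite lerDl.
have e1 : forall i : 'I_n, 1 <= 1 + expR (mu * ((x i)%:R - K%:R)).
  by move=> i; rewrite lerDl expR_ge0.
have Pi1 : 1 <= Pi by apply: prod_ge1.
have Pi0 : 0 <= Pi by apply: le_trans Pi1.
apply: (big_ind (fun m => ((1 + m)%N%:R : R) ^+ a <= (1 + K%:R) ^+ a * Pi)).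
- rewrite addn0 expr1n; apply: le_trans K1 _.
  by rewrite -[X in X <= _]mulr1; apply: ler_wpM2l => //; apply: le_trans K1.
- by move=> u v Hu Hv; rewrite /maxn; case: ifP.
- move=> i _; apply: le_trans (@one_bound a K (x i) mu mu0 haK) _.
  apply: ler_wpM2l; first by apply: le_trans K1.
  rewrite /Pi (bigD1 i) //= -[X in X <= _]mulr1; apply: ler_wpM2l.
    by apply: le_trans (e1 i).
  exact: prod_ge1.
Qed.

Lemma poi_psi_le (th h mu : R) (K : nat) : 0 <= th <= h -> 0 <= mu ->
  (\esum_(m in [set: nat]) (poi_pmf th m * (1 + expR (mu * (m%:R - K%:R))))%:E
   <= (1 + expR (h * (expR mu - 1) - mu * K%:R))%:E)%E.
Proof.
move=> /andP[th0 thh] mu0.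
have p0 : forall m, 0 <= poi_pmf th m by move=> m; exact: poi_pmf_ge0.
under eq_esum => m _ do rewrite mulrDr mulr1 EFinD.
rewrite esumD; last 2 first.
- by move=> m _; rewrite lee_fin.
- by move=> m _; rewrite lee_fin mulr_ge0 ?expR_ge0.
rewrite EFinD; apply: leeD.
  apply: le_trans (_ : \esum_(m in [set: nat]) (poi_pmf th m * 1 ^+ m)%:E <= _)%E.
    by apply: le_esum => m _; rewrite expr1n mulr1.
  by apply: le_trans (poi_mgf_le th0 ler01) _; rewrite mulr1 -expRD addNr expR0.
apply: le_trans (_ : \esum_(m in [set: nat])
   ((expR (- (mu * K%:R)))%:E * (poi_pmf th m * (expR mu) ^+ m)%:E) <= _)%E.
  apply: le_esum => m _; rewrite -EFinM lee_fin.
  rewrite mulrCA -expRM_natl -expRD; apply: ler_wpM2l => //.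
  by rewrite ler_expR; lra.
apply: le_trans; first apply: esumZl_le.
- by rewrite lee_fin expR_ge0.
- by move=> m; rewrite lee_fin mulr_ge0 // exprn_ge0 // expR_ge0.
apply: le_trans (_ : (expR (- (mu * K%:R)))%:E * (expR (- th) * expR (th * expR mu))%:E <= _)%E.
  apply: lee_wpmul2l; first by rewrite lee_fin expR_ge0.
  exact: (poi_mgf_le th0 (expR_ge0 mu)).
rewrite -EFinM lee_fin -!expRD ler_expR.
have e1 : 1 <= expR mu by rewrite -expR0 ler_expR.
have : th * (expR mu - 1) <= h * (expR mu - 1).
  by apply: ler_wpM2r => //; rewrite subr_ge0.
lra.
Qed.

End D.

Section E.
Variable R : realType.

Definition aexp (d : nat) (j : 'I_d) (beta : nat) (k : 'I_d) : nat :=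
  if k == j then beta else 1%N.

Definition phi (d : nat) (mu : R) (K : 'I_d -> nat) (x : {ffun 'I_d -> nat}) : R :=
  \prod_(k < d) (1 + expR (mu * ((x k)%:R - (K k)%:R))).

Lemma ms_bound (n d : nat) (j : 'I_d) (beta : nat) (mu : R) (K : 'I_d -> nat)
   (X : {ffun 'I_n -> {ffun 'I_d -> nat}}) :
  0 <= mu -> (forall k, (aexp j beta k)%:R <= mu * (1 + (K k)%:R)) ->
  @moment_stat R n d j beta X <=
  (\prod_(k < d) (1 + (K k)%:R) ^+ aexp j beta k) * \prod_(i < n) phi mu K (X i).
Proof.
move=> mu0 haK.
have -> : @moment_stat R n d j beta X =
    \prod_(k < d) ((1 + xmax X k)%N%:R) ^+ aexp j beta k.
  rewrite /moment_stat [RHS](bigD1 j) //= /aexp eqxx; congr (_ * _).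
  by apply: eq_bigr => k /negPf ->; rewrite expr1.
apply: le_trans (_ : \prod_(k < d) ((1 + (K k)%:R) ^+ aexp j beta k *
    \prod_(i < n) (1 + expR (mu * ((X i k)%:R - (K k)%:R)))) <= _).
  apply: ler_prod => k _; apply/andP; split; first by apply: exprn_ge0; rewrite ler0n.
  exact: (@max_bound R n (fun i => X i k) _ _ mu mu0 (haK k)).
rewrite big_split /= /phi; rewrite [X in _ * X <= _]exchange_big /=; exact: le_refl.
Qed.

Lemma main_bound (d0 : measure_display) (T : measurableType d0)
  (P : probability T R) (d n : nat) (theta : 'I_d -> T -> R) (j : 'I_d)
  (beta : nat) (h mu : R) (K : 'I_d -> nat) :
  (forall k, measurable_fun setT (theta k)) -> supported_box P theta h -> 0 <= mu ->
  (forall k, (aexp j beta k)%:R <= mu * (1 + (K k)%:R)) ->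
  (forall k, n%:R * expR (h * (expR mu - 1) - mu * (K k)%:R) <= 1) ->
  (mix_expect P theta (@moment_stat R n d j beta)
    <= (\prod_(k < d) (expR 1 * (1 + (K k)%:R) ^+ aexp j beta k))%:E)%E.
Proof.
move=> mth Ps mu0 haK hn.
pose G : R := \prod_(k < d) (1 + (K k)%:R) ^+ aexp j beta k.
pose del := fun k => expR (h * (expR mu - 1) - mu * (K k)%:R).
have G0 : 0 <= G by apply: prodr_ge0 => k _; apply: exprn_ge0; rewrite addr_ge0.
have pm0 : forall x, (0 <= p_mix P theta x)%E by move=> x; apply: (p_mix_ge0 _ mth Ps).
have phi0 : forall x, 0 <= phi mu K x.
  by move=> x; apply: prodr_ge0 => k _; rewrite addr_ge0 ?expR_ge0.
have w0 : forall X : {ffun 'I_n -> {ffun 'I_d -> nat}},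
    (0 <= \prod_(i < n) p_mix P theta (X i))%E.
  by move=> X; apply: prode_ge0.
have f0 : forall x, (0 <= p_mix P theta x * (phi mu K x)%:E)%E.
  by move=> x; apply: mule_ge0; rewrite ?lee_fin.
rewrite /mix_expect.
apply: (@le_trans _ _ (\esum_(X in [set: {ffun 'I_n -> {ffun 'I_d -> nat}}])
   (G%:E * \prod_(i < n) (p_mix P theta (X i) * (phi mu K (X i))%:E)))%E).
  apply: le_esum => X _.
  apply: le_trans (lee_wpmul2l (w0 X) (_ : (@moment_stat R n d j beta X)%:E <=
     (G * \prod_(i < n) phi mu K (X i))%:E)%E) _.
    by rewrite lee_fin; apply: ms_bound.
  rewrite EFinM muleCA (big_split (idx := 1%E)) /= prodEFin; exact: le_refl.
apply: le_trans; first apply: esumZl_le.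
- by rewrite lee_fin.
- by move=> X; apply: prode_ge0 => i _; apply: f0.
apply: le_trans; first apply: lee_wpmul2l; first by rewrite lee_fin.
  apply: (@esum_prod_le R _ n (fun _ x => p_mix P theta x * (phi mu K x)%:E)%E).
  by move=> _ x; apply: f0.
apply: le_trans; first apply: lee_wpmul2l; first by rewrite lee_fin.
  apply: (@lee_prod_nn R _ _ _ (fun _ => (\prod_(k < d) (1 + del k))%:E)) => i.
  apply/andP; split; first by apply: esum_ge0 => x _; apply: f0.
  apply: (@pmix_esum_le R d0 T P d theta h (fun k m => 1 + expR (mu * (m%:R - (K k)%:R)))
     (fun k => 1 + del k)) => //; try (by move=> k m; rewrite addr_ge0 ?expR_ge0);
    try (by move=> k; rewrite addr_ge0 ?expR_ge0).
  by move=> k th hth; apply: poi_psi_le.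
rewrite prodEFin -EFinM lee_fin prodr_const card_ord -prodrXl.
rewrite /G -big_split /=; apply: ler_prod => k _; apply/andP; split.
  by apply: mulr_ge0; apply: exprn_ge0; rewrite addr_ge0 ?expR_ge0.
rewrite mulrC; apply: ler_wpM2r; first by apply: exprn_ge0; rewrite addr_ge0.
apply: le_trans (_ : (expR (del k)) ^+ n <= _).
  by apply: lerXn2r; rewrite ?nnegrE ?addr_ge0 ?expR_ge0 // expR_ge1Dx.
by rewrite -expRM_natl ler_expR; apply: hn.
Qed.

End E.

Section F.
Variable R : realType.

Lemma e_ge2 : 2 <= expR 1 :> R.
Proof. by have := expR_ge1Dx (1 : R); rewrite (_ : 1 + 1 = 2) //. Qed.

Lemma e_lt3 : expR 1 < 3 :> R.
Proof.
have h1 : 7 / 8 <= expR (- (8^-1)) :> R.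
  apply: le_trans (expR_ge1Dx _); lra.
have y0 : 0 < expR (8^-1) :> R by apply: expR_gt0.
have h2 : expR (8^-1) <= 8 / 7 :> R.
  have := h1; rewrite expRN => h1'.
  have : expR (8^-1) * (7 / 8) <= 1 :> R.
    apply: le_trans (_ : expR (8^-1) * (expR (8^-1))^-1 <= 1).
      by apply: ler_wpM2l => //; exact: ltW.
    by rewrite divff // gt_eqF.
  lra.
have -> : expR 1 = expR (8^-1) ^+ 8 :> R by rewrite -expRM_natl divff.
set y := expR (8^-1).
have y8 : y ^+ 8 <= (8 / 7) ^+ 8.
  by apply: lerXn2r; rewrite ?nnegrE; [exact: ltW|lra|exact: h2].
apply: le_lt_trans y8 _.
rewrite expr_div_n ltr_pdivrMr ?exprn_gt0 //.
rewrite !(exprS, expr0, mulr1).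
lra.
Qed.

Lemma ln_le_div_e (y : R) : 0 < y -> ln y <= y / expR 1.
Proof.
move=> y0.
have e0 : 0 < expR 1 :> R by apply: expR_gt0.
have H2 : -1 < y / expR 1 - 1.
  have : 0 < y / expR 1 by rewrite divr_gt0.
  lra.
have := @le_ln1Dx R (y / expR 1 - 1) H2.
rewrite (_ : 1 + (y / expR 1 - 1) = y / expR 1); last by rewrite addrC subrK.
rewrite ln_div ?posrE // expRK; lra.
Qed.

Lemma ln_le_half (y : R) : 0 < y -> ln y <= y / 2.
Proof.
move=> y0; apply: le_trans (ln_le_div_e y0) _.
apply: ler_wpM2l; first exact: ltW.
by rewrite lef_pV2 ?posrE ?expR_gt0 //; exact: e_ge2.
Qed.

Lemma ln_n_gt1 (n : nat) : (3 <= n)%N -> 1 < ln n%:R :> R.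
Proof.
move=> n3.
have e0 : 0 < expR 1 :> R by apply: expR_gt0.
rewrite -[X in X < _](expRK 1) ltr_ln ?posrE //; last by rewrite ltr0n (leq_trans _ n3).
apply: lt_le_trans e_lt3 _; by rewrite (ler_nat R 3 n).
Qed.

Lemma n_expR_le (n : nat) (E : R) : (3 <= n)%N -> E <= - ln n%:R ->
  n%:R * expR E <= 1.
Proof.
move=> n3 HE.
have n0 : 0 < n%:R :> R by rewrite ltr0n (leq_trans _ n3).
apply: le_trans (_ : n%:R * expR (- ln n%:R) <= _).
  by apply: ler_wpM2l; [exact: ltW| rewrite ler_expR].
by rewrite expRN lnK ?posrE // divff // gt_eqF.
Qed.

Lemma case1_facts (n : nat) : (3 <= n)%N ->
  let L := ln n%:R / ln (ln n%:R) in
  expR 1 <= L /\ 1 <= ln L /\ ln n%:R <= 2 * (L * ln L) :> R.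
Proof.
move=> n3 L.
set x := ln n%:R.
have x1 : 1 < x := ln_n_gt1 n3.
have x0 : 0 < x by lra.
have lx0 : 0 < ln x by apply: ln_gt0.
have e0 : 0 < expR 1 :> R by apply: expR_gt0.
have L0 : 0 < L by rewrite /L divr_gt0.
have Le : expR 1 <= L.
  rewrite /L ler_pdivlMr //.
  have := ln_le_div_e x0; rewrite ler_pdivlMr // mulrC //.
have lL1 : 1 <= ln L by rewrite -(expRK 1) ler_ln ?posrE.
have lnLe : ln L = ln x - ln (ln x) by rewrite /L ln_div ?posrE.
have hll := ln_le_half lx0.
have xe : x = L * ln x by rewrite /L divfK // gt_eqF.
have lx2 : ln x <= 2 * ln L by lra.
split => //; split => //.
rewrite {1}xe mulrCA; apply: ler_wpM2l; [exact: ltW|lra].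
Qed.

Lemma case1_ineq (n : nat) (h A K : R) : (3 <= n)%N -> 0 < h -> 6 <= A -> 2 * h <= A ->
  let L := ln n%:R / ln (ln n%:R) in
  A * L - 1 <= K ->
  n%:R * expR (h * (expR (ln L) - 1) - ln L * K) <= 1.
Proof.
move=> n3 h0 A6 hA L HK.
have [Le [lL1 xL]] := case1_facts n3.
rewrite -/L in Le lL1 xL.
have L0 : 0 < L by apply: lt_le_trans Le; apply: expR_gt0.
rewrite lnK ?posrE //.
apply: n_expR_le => //.
set u := ln L in lL1 xL *.
have a : u * (A * L - 1) <= u * K by apply: ler_wpM2l => //; lra.
have b1 : h * L <= (A / 2) * L by apply: ler_wpM2r; [exact: ltW| lra].
have b2 : (A / 2) * L * 1 <= (A / 2) * L * u.
  by apply: ler_wpM2l => //; apply: mulr_ge0; [lra|exact: ltW].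
have d : 6 * (L * u) <= A * (L * u).
  by apply: ler_wpM2r => //; apply: mulr_ge0; [exact: ltW|lra].
have e : 1 * u <= L * u.
  apply: ler_wpM2r; [lra|]. have := e_ge2; lra.
lra.
Qed.

Lemma case2_ineq (n : nat) (s A K : R) : (3 <= n)%N -> 0 < s -> 4 <= A ->
  2 * expR 1 * s <= A -> A * ln n%:R - 1 <= K ->
  n%:R * expR (s * ln n%:R * (expR 1 - 1) - 1 * K) <= 1.
Proof.
move=> n3 s0 A4 hA HK.
apply: n_expR_le => //.
set x := ln n%:R in HK *.
have x1 : 1 < x := ln_n_gt1 n3.
have e0 : 0 < expR 1 :> R by apply: expR_gt0.
have a : (2 * expR 1 * s) * x <= A * x by apply: ler_wpM2r; [lra|].
have b : 0 <= s * x by apply: mulr_ge0; lra.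
have c : 4 * x <= A * x by apply: ler_wpM2r; lra.
lra.
Qed.

End F.

Section G.
Variable R : realType.

Lemma final_arith (d : nat) (j : 'I_d) (beta : nat) (B : R) (K : 'I_d -> nat) :
  1 <= B -> (forall k, (K k)%:R <= B + (aexp j beta k)%:R) ->
  \prod_(k < d) (expR 1 * (1 + (K k)%:R) ^+ aexp j beta k)
  <= expR 1 * (2 + beta%:R) ^+ beta * (3 * expR 1 * B) ^+ (d - 1 + beta).
Proof.
move=> B1 HK.
have e2 := @e_ge2 R.
have e0 : 0 <= expR 1 :> R by apply: expR_ge0.
set C := 3 * expR 1 * B.
have BC : B <= C.
  rewrite /C -[X in X <= _]mul1r; apply: ler_wpM2r; lra.
have C0 : 0 <= C by lra.
rewrite (bigD1 j) //= {1}/aexp eqxx.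
have Hj : expR 1 * (1 + (K j)%:R) ^+ beta <= expR 1 * (2 + beta%:R) ^+ beta * C ^+ beta.
  rewrite -mulrA; apply: ler_wpM2l => //.
  rewrite -exprMn; apply: lerXn2r; rewrite ?nnegrE; first by rewrite addr_ge0.
    by apply: mulr_ge0 => //; rewrite addr_ge0.
  have := HK j; rewrite /aexp eqxx => HKj.
  have bB : 0 <= beta%:R * (B - 1) by apply: mulr_ge0; [exact: ler0n|lra].
  have bC : (2 + beta%:R) * B <= (2 + beta%:R) * C.
    by apply: ler_wpM2l => //; rewrite addr_ge0.
  have b0 : 0 <= beta%:R :> R by exact: ler0n.
  lra.
have Ho : \prod_(k < d | k != j) (expR 1 * (1 + (K k)%:R) ^+ aexp j beta k)
    <= C ^+ (d - 1).
  apply: le_trans (_ : \prod_(k < d | k != j) C <= _).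
    apply: ler_prod => k kj; rewrite /aexp (negPf kj) expr1.
    apply/andP; split; first by apply: mulr_ge0 => //; rewrite addr_ge0.
    have := HK k; rewrite /aexp (negPf kj) => HKk.
    have : expR 1 * (1 + (K k)%:R) <= expR 1 * (3 * B).
      by apply: ler_wpM2l => //; lra.
    rewrite /C; lra.
  rewrite (eq_bigl (fun k => k \in predC1 j)); last by move=> k; rewrite inE.
  by rewrite prodr_const cardC1 card_ord subn1.
rewrite addnC exprD mulrA; apply: ler_pM => //.
by apply: prodr_ge0 => k _; apply: mulr_ge0 => //; apply: exprn_ge0; rewrite addr_ge0.
Qed.

End G.

Unset Implicit Arguments.

Theorem lemma8 (R : realType) :
  exists c : nat -> R, (forall beta, 0 < c beta) /\
  exists c1 c2 c3 c4 : R, 0 < c1 /\ 0 < c2 /\ 0 < c3 /\ 0 < c4 /\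
  forall (d n : nat) (j : 'I_d) (beta : nat) (h s : R),
    (1 <= d)%N -> (3 <= n)%N -> 0 < h -> 0 < s ->
  forall (d0 : measure_display) (T : measurableType d0) (P : probability T R)
         (theta : 'I_d -> T -> R),
    (forall k, measurable_fun setT (theta k)) ->
    (supported_box P theta h ->
       (mix_expect P theta (@moment_stat R n d j beta)
        <= (c beta * (Num.max c1 (c2 * h) * (ln n%:R / ln (ln n%:R))) ^+ (d - 1 + beta))%:E)%E)
    /\
    (supported_box P theta (s * ln n%:R) ->
       (mix_expect P theta (@moment_stat R n d j beta)
        <= (c beta * (Num.max c3 (c4 * s) * ln n%:R) ^+ (d - 1 + beta))%:E)%E).
Proof.
have e0 : 0 < expR 1 :> R by apply: expR_gt0.
have e2 := @e_ge2 R.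
exists (fun beta => expR 1 * (2 + beta%:R) ^+ beta); split.
  move=> beta; apply: mulr_gt0 => //; apply: exprn_gt0.
exists (18 * expR 1), (6 * expR 1), (12 * expR 1), (6 * expR 1 ^+ 2).
split; first by apply: mulr_gt0.
split; first by apply: mulr_gt0.
split; first by apply: mulr_gt0.
split; first by apply: mulr_gt0 => //; apply: exprn_gt0.
move=> d n j beta h s d1 n3 h0 s0 d0 T P theta mth.
have x1 : 1 < ln n%:R :> R := @ln_n_gt1 R n n3.
have e3 : 0 < 3 * expR 1 :> R by apply: mulr_gt0.
split => Ps.
- pose L := ln n%:R / ln (ln n%:R) : R.
  have [Le [lL1 xL]] := @case1_facts R n n3.
  rewrite -/L in Le lL1 xL *.
  pose M := Num.max (18 * expR 1) (6 * expR 1 * h).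
  pose A := M / (3 * expR 1).
  have A6 : 6 <= A.
    rewrite /A ler_pdivlMr //; rewrite /M le_max; apply/orP; left; lra.
  have hA : 2 * h <= A.
    rewrite /A ler_pdivlMr //; rewrite /M le_max; apply/orP; right; lra.
  pose B := A * L.
  have B1 : 1 <= B.
    rewrite /B; have : 6 * 2 <= A * L by apply: ler_pM => //; lra.
    lra.
  have [tB1 tB2] : (Num.truncn B)%:R <= B /\ B < (Num.truncn B).+1%:R.
    by apply/andP; apply: Num.Theory.truncn_itv; lra.
  pose K := fun k => (Num.truncn B + aexp j beta k)%N.
  apply: le_trans (@main_bound R d0 T P d n theta j beta h (ln L) K mth Ps _ _ _) _.
  + lra.
  + move=> k; rewrite /K natrD.
    have : 0 <= (Num.truncn B)%:R :> R by exact: ler0n.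
    have : 0 <= (aexp j beta k)%:R :> R by exact: ler0n.
    have : (aexp j beta k)%:R * 1 <= (aexp j beta k)%:R * ln L.
      by apply: ler_wpM2l => //; exact: ler0n.
    nra.
  + move=> k; apply: (@case1_ineq R n h A) => //.
    rewrite /K natrD -/L -/B.
    have : 0 <= (aexp j beta k)%:R :> R by exact: ler0n.
    rewrite -natr1 in tB2; lra.
  + rewrite lee_fin; apply: le_trans (@final_arith R d j beta B K B1 _) _.
      move=> k; rewrite /K natrD; lra.
    have -> : 3 * expR 1 * B = M * L.
      rewrite /B /A; field; lra.
    exact: le_refl.
- pose M := Num.max (12 * expR 1) (6 * expR 1 ^+ 2 * s).
  pose A := M / (3 * expR 1).
  have A4 : 4 <= A.
    rewrite /A ler_pdivlMr //; rewrite /M le_max; apply/orP; left; lra.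
  have hA : 2 * expR 1 * s <= A.
    rewrite /A ler_pdivlMr //; rewrite /M le_max; apply/orP; right.
    rewrite expr2; lra.
  pose B := A * ln n%:R.
  have B1 : 1 <= B.
    rewrite /B; have : 4 * 1 <= A * ln n%:R by apply: ler_pM => //; lra.
    lra.
  have [tB1 tB2] : (Num.truncn B)%:R <= B /\ B < (Num.truncn B).+1%:R.
    by apply/andP; apply: Num.Theory.truncn_itv; lra.
  pose K := fun k => (Num.truncn B + aexp j beta k)%N.
  apply: le_trans (@main_bound R d0 T P d n theta j beta (s * ln n%:R) 1 K mth Ps _ _ _) _.
  + lra.
  + move=> k; rewrite /K natrD mul1r.
    have : 0 <= (Num.truncn B)%:R :> R by exact: ler0n.
    lra.
  + move=> k; apply: (@case2_ineq R n s A) => //.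
    rewrite /K natrD -/B.
    have : 0 <= (aexp j beta k)%:R :> R by exact: ler0n.
    rewrite -natr1 in tB2; lra.
  + rewrite lee_fin; apply: le_trans (@final_arith R d j beta B K B1 _) _.
      move=> k; rewrite /K natrD; lra.
    have -> : 3 * expR 1 * B = M * ln n%:R.
      rewrite /B /A; field; lra.
    exact: le_refl.
Qed.
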